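(* Let $X$ be a shift space and let $w\in\mathcal L(X)$. Let $U\subseteq\mathcal L(X)$ be a finite $X$-maximal suffix code and $V\subseteq\mathcal L(X)$ a finite $X$-maximal prefix code. Let $\ell\in\mathcal L(X)$ with $\ell w\in\mathcal L(X)$ be such that $A\ell\cap\mathcal L(X)\subseteq U$ and such that $\mathcal E_{A,V}(\ell w)$ is a tree. Set $U'=(U\setminus A\ell)\cup\{\ell\}$. Then $\mathcal E_{U',V}(w)$ is a tree if and only if $\mathcal E_{U,V}(w)$ is a tree.
   Context: $A$ is a finite alphabet; a shift space is a closed shift-invariant subset $X\subseteq A^{\mathbb Z}$; $\mathcal L(X)$ is its set of finite factors. A prefix code (resp. suffix code) is a set of words none of which is a proper prefix (resp. proper suffix) of another; a prefix (resp. suffix) code $U\subseteq\mathcal L(X)$ is $X$-maximal if it is not properly contained in a prefix (resp. suffix) code contained in $\mathcal L(X)$. For $U,V\subseteq A^*$ and $w\in\mathcal L(X)$, let $L_U(w)=\{u\in U: uw\in\mathcal L(X)\}$ and $R_V(w)=\{v\in V: wv\in\mathcal L(X)\}$; the generalized extension graph $\mathcal E_{U,V}(w)$ is the undirected bipartite graph whose vertex set is the disjoint union of $L_U(w)$ and $R_V(w)$, with an edge between $u\in L_U(w)$ and $v\in R_V(w)$ iff $uwv\in\mathcal L(X)$. (Here $A$ denotes the set of one-letter words.) *)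

(* Defs.v *)
From mathcomp Require Import all_boot all_order all_algebra.
Set Implicit Arguments. Unset Strict Implicit. Unset Printing Implicit Defensive.
Import GRing.Theory Num.Theory.
Local Open Scope ring_scope.

Section ShiftDefs.
Variable A : finType.

Definition config := int -> A.

Definition shift (x : config) : config := fun i => x (i + 1).

Definition window (x : config) (i : int) (n : nat) : seq A :=
  [seq x (i + (k%:Z)) | k <- iota 0 n].

(* X is closed (product topology) and shift-invariant (sigma(X) = X) *)
Definition shift_space (X : config -> Prop) : Prop :=
  (forall x : config, X x <-> X (shift x)) /\
  (forall x : config,
     (forall n : nat, exists y, X y /\
        forall i : int, - (n%:Z) <= i <= n%:Z -> y i = x i) -> X x).

Definition lang (X : config -> Prop) (w : seq A) : Prop :=
  exists (x : config) (i : int), X x /\ w = window x i (size w).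

Definition prefix_code (U : seq A -> Prop) : Prop :=
  forall u v, U u -> U v -> prefix u v -> u = v.

Definition suffix_code (U : seq A -> Prop) : Prop :=
  forall u v, U u -> U v -> suffix u v -> u = v.

Definition X_max_prefix_code (X : config -> Prop) (U : seq A -> Prop) : Prop :=
  (forall u, U u -> lang X u) /\ prefix_code U /\
  (forall U2 : seq A -> Prop, (forall u, U u -> U2 u) ->
     (forall u, U2 u -> lang X u) -> prefix_code U2 -> forall u, U2 u -> U u).

Definition X_max_suffix_code (X : config -> Prop) (U : seq A -> Prop) : Prop :=
  (forall u, U u -> lang X u) /\ suffix_code U /\
  (forall U2 : seq A -> Prop, (forall u, U u -> U2 u) ->
     (forall u, U2 u -> lang X u) -> suffix_code U2 -> forall u, U2 u -> U u).

(* vertices of the generalized extension graph: (false, u) left, (true, v) right *)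
Definition vertex := (bool * seq A)%type.

Definition ext_vertex (X : config -> Prop) (L R : seq A -> Prop) (w : seq A)
  (p : vertex) : Prop :=
  if p.1 then R p.2 /\ lang X (w ++ p.2) else L p.2 /\ lang X (p.2 ++ w).

Definition ext_edge (X : config -> Prop) (L R : seq A -> Prop) (w : seq A)
  (p q : vertex) : Prop :=
  ext_vertex X L R w p /\ ext_vertex X L R w q /\
  ((p.1 = false /\ q.1 = true /\ lang X (p.2 ++ w ++ q.2)) \/
   (p.1 = true /\ q.1 = false /\ lang X (q.2 ++ w ++ p.2))).

Fixpoint is_walk (E : vertex -> vertex -> Prop) (x : vertex) (p : seq vertex)
  : Prop :=
  match p with
  | [::] => True
  | y :: p' => E x y /\ is_walk E y p'
  end.

Definition connected (Vt : vertex -> Prop) (E : vertex -> vertex -> Prop) :=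
  forall x y, Vt x -> Vt y -> exists p, is_walk E x p /\ last x p = y.

(* a cycle: closed walk x, p_1, ..., p_k = x with k >= 3 distinct vertices *)
Definition acyclic (E : vertex -> vertex -> Prop) :=
  ~ exists x p, [/\ is_walk E x p, last x p = x, 3 <= size p & uniq p]%N.

Definition is_tree (Vt : vertex -> Prop) (E : vertex -> vertex -> Prop) :=
  (exists x, Vt x) /\ connected Vt E /\ acyclic E.

Definition ext_graph_tree (X : config -> Prop) (L R : seq A -> Prop)
  (w : seq A) : Prop :=
  is_tree (ext_vertex X L R w) (ext_edge X L R w).

(* the set A of one-letter words *)
Definition letters : seq A -> Prop := fun u => size u = 1%N.

End ShiftDefs.

(* Main.v *)
Require Import Defs.
From mathcomp Require Import all_boot all_order all_algebra.
From mathcomp Require Import zify.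
Set Implicit Arguments. Unset Strict Implicit. Unset Printing Implicit Defensive.
Import GRing.Theory Num.Theory.

Section Walks.
Variable A : finType.
Implicit Types (E F : vertex A -> vertex A -> Prop) (x y : vertex A) (s t : seq (vertex A)).

Lemma walk_cat E x s1 s2 :
  is_walk E x (s1 ++ s2) <-> is_walk E x s1 /\ is_walk E (last x s1) s2.
Proof.
elim: s1 x => [|y s1 IH] x /=; first by split=> [H|[]].
split=> [[H1 /IH [H2 H3]]|[[H1 H2] H3]]; first by [].
by split=> //; apply/IH.
Qed.

Lemma walk_rcons E x s y :
  is_walk E x (rcons s y) <-> is_walk E x s /\ E (last x s) y.
Proof.
split; first by rewrite -cats1 => /walk_cat /= [? []].
by move=> [H1 H2]; rewrite -cats1; apply/walk_cat.
Qed.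

Lemma walk_mono E F x s : (forall u v, E u v -> F u v) -> is_walk E x s -> is_walk F x s.
Proof. move=> H; elim: s x => [|y s IH] x //= [/H ? /IH ?]; by split. Qed.

Lemma walk_mono_mem E F x s :
  (forall u v, u \in x :: s -> v \in s -> E u v -> F u v) -> is_walk E x s -> is_walk F x s.
Proof.
elim: s x => [|y s IH] x //= H [Hxy Hw]; split.
  by apply: H => //; rewrite ?inE eqxx.
apply: IH Hw => u v Hu Hv; apply: H; rewrite inE ?Hv ?orbT //.
by move: Hu; rewrite !inE => /orP[->|->]; rewrite ?orbT.
Qed.

Lemma walk_map E F (f : vertex A -> vertex A) x s :
  (forall u v, E u v -> F (f u) (f v)) -> is_walk E x s -> is_walk F (f x) (map f s).
Proof. move=> H; elim: s x => [|y s IH] x //= [/H ? /IH ?]; by split. Qed.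

Lemma walk_rev E x s : (forall u v, E u v -> E v u) -> is_walk E x s ->
  exists t, is_walk E (last x s) t /\ last (last x s) t = x.
Proof.
move=> Hs; elim: s x => [|y s IH] x /=; first by exists [::].
move=> [Hxy /IH [t [Ht Hl]]]; exists (rcons t x); split.
  by apply/walk_rcons; split => //; rewrite Hl; apply: Hs.
by rewrite last_rcons.
Qed.

Lemma walk_short E x s : is_walk E x s ->
  exists t, [/\ is_walk E x t, last x t = last x s & uniq (x :: t)].
Proof.
elim: s x => [|y s IH] x /=; first by exists [::].
move=> [Hxy /IH [t [Ht Hl Hu]]].
case Hx: (x \in y :: t).
  have Hw : is_walk E x (y :: t) by [].
  have Hl' : last y t = last x (y :: t) by [].
  rewrite -Hl Hl'; move: Hw Hu {Ht Hl Hl'}.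
  case/splitPr: Hx => t1 t2 Hw Hu.
  exists t2; split.
  - by move: Hw => /walk_cat [_ /= []].
  - by rewrite last_cat.
  - by move: Hu; rewrite cat_uniq => /and3P[_ _].
exists (y :: t); split => //=; rewrite Hx; exact: Hu.
Qed.

Definition Eminus E x y u v := E u v /\ ~ (u = x /\ v = y) /\ ~ (u = y /\ v = x).

Definition NR E := forall x y, E x y ->
  ~ exists q, is_walk (Eminus E x y) y q /\ last y q = x.

Lemma acyc_NR E : (forall u, ~ E u u) -> acyclic E -> NR E.
Proof.
move=> Hirr Hac x y Exy [q [Hq Hl]].
have [t [Ht Htl Hu]] := walk_short Hq.
apply: Hac; exists x, (y :: t); split => //=.
- split => //; apply: walk_mono Ht => u v []//.
- by rewrite Htl.
- case: t Ht Htl {Hu} => [|z [|z' t]] //=.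
    by move=> _ Hyx; rewrite Hyx Hl in Exy; case: (Hirr _ Exy).
  move=> [[_ [_ H]] _] Hzx; case: H; split=> //; by rewrite Hzx Hl.
Qed.

Lemma avoid_walk E x y q a : is_walk E a q -> uniq (a :: q) -> last a q = x ->
  y \notin q -> (a = y -> q <> [:: x]) -> is_walk (Eminus E x y) a q.
Proof.
elim: q a => [|b q IH] a //= [Hab Hw] /andP[Ha Hu] Hl.
rewrite inE negb_or => /andP[Hyb Hyq] Hay; split.
  split => //; split.
    by move=> [_ Hb]; rewrite Hb eqxx in Hyb.
  move=> [Hay' Hbx]; apply: (Hay Hay').
  clear Hay; case: q Hw Hu Hl Hyq {IH Ha} => [|c q] /=; first by rewrite Hbx.
  move=> _ /andP[Hx _] Hl _; case/negP: Hx.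
  by rewrite Hbx -Hl mem_last.
apply: IH => // Hby; by rewrite Hby eqxx in Hyb.
Qed.

Lemma NR_acyc E : NR E -> acyclic E.
Proof.
move=> H [x [[|y q] [Hw Hl Hs Hu]]] //=.
move: Hw Hl Hs Hu => /= [Hxy Hq] Hl Hs Hu.
apply: (H x y Hxy); exists q; split => //.
apply: avoid_walk => //.
  by move: Hu => /andP[].
by move=> _ Hq1; move: Hs; rewrite Hq1.
Qed.

End Walks.

Section Lang.
Variable A : finType.
Implicit Types (s t : seq A).

Lemma window_cat (x : config A) (i : int) (n m : nat) :
  window x i (n + m) = window x i n ++ window x (i + n%:Z)%R m.
Proof.
rewrite /window iotaD map_cat add0n; congr (_ ++ _).
have -> : iota n m = map (addn n) (iota 0 m) by rewrite -iotaDl addn0.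
rewrite -map_comp; apply: eq_map => k /=.
by rewrite PoszD GRing.addrA.
Qed.

Lemma window_cons (x : config A) (i : int) (n : nat) :
  window x (i - 1)%R n.+1 = x (i - 1)%R :: window x i n.
Proof.
rewrite /window /= GRing.addr0; congr (_ :: _).
have -> : iota 1 n = map (addn 1) (iota 0 n) by rewrite -iotaDl.
rewrite -map_comp; apply: eq_map => k /=.
congr x; rewrite PoszD; lia.
Qed.

Lemma lang_cat (X : config A -> Prop) s t : lang X (s ++ t) -> lang X s /\ lang X t.
Proof.
move=> [x [i [Hx]]]; rewrite size_cat window_cat => Heq.
have Hs : size s = size (window x i (size s)) by rewrite size_map size_iota.
move/eqP: Heq; rewrite eqseq_cat // => /andP[/eqP H1 /eqP H2].
by split; [exists x, i | exists x, (i + (size s)%:Z)%R].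
Qed.

Lemma lang_catl (X : config A -> Prop) s t : lang X (s ++ t) -> lang X s.
Proof. by case/lang_cat. Qed.
Lemma lang_catr (X : config A -> Prop) s t : lang X (s ++ t) -> lang X t.
Proof. by case/lang_cat. Qed.

Lemma lang_ext (X : config A -> Prop) s : lang X s -> exists a, lang X (a :: s).
Proof.
move=> [x [i [Hx Heq]]]; exists (x (i - 1)%R), x, (i - 1)%R; split => //=.
by rewrite window_cons -Heq.
Qed.
End Lang.

Section Main.
Variables (A : finType) (X : config A -> Prop) (w : seq A) (U V : seq (seq A)) (l : seq A) (a0 : A).
Hypothesis HU : X_max_suffix_code X (fun u => u \in U).
Hypothesis Hlw : lang X (l ++ w).
Hypothesis Ha0 : lang X (a0 :: l ++ w).
Hypothesis HAl : forall a : A, lang X (a :: l) -> (a :: l) \in U.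
Hypothesis HT : ext_graph_tree X (@letters A) (fun v => v \in V) (l ++ w).

Local Notation lg := (lang X).
Definition L1 u := (u \in U /\ ~ (exists a : A, u = a :: l)) \/ u = l.
Definition L2 u := u \in U.
Definition RV (v : seq A) := v \in V.
Local Notation E1 := (ext_edge X L1 RV w).
Local Notation P1 := (ext_vertex X L1 RV w).
Local Notation E2 := (ext_edge X L2 RV w).
Local Notation P2 := (ext_vertex X L2 RV w).
Local Notation ET := (ext_edge X (@letters A) RV (l ++ w)).
Local Notation PT := (ext_vertex X (@letters A) RV (l ++ w)).

Definition c : vertex A := (false, l).
Definition x0 : vertex A := (false, a0 :: l).
Definition isF (p : vertex A) : bool :=
  ~~ p.1 && (if p.2 is _ :: t then t == l else false).
Definition g (p : vertex A) : vertex A := if p.1 then p else (false, p.2 ++ l).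
Definition h (p : vertex A) : vertex A := if p.1 then p else (false, take 1 p.2).
Definition FT (p : vertex A) := exists a, p = (false, a :: l) /\ lg (a :: l ++ w).
Definition inN (p : vertex A) := p.1 = true /\ p.2 \in V /\ lg (l ++ w ++ p.2).
Definition TV p := FT p \/ inN p.
Definition ET2 a b := E2 a b /\ (isF a \/ isF b).
Definition Hedge a b := E2 a b /\ ~~ isF a /\ ~~ isF b.
Definition f (p : vertex A) := if isF p then c else p.
Definition lift (p : vertex A) := if p == c then x0 else p.

Definition edgeLR (L R : seq A -> Prop) (w0 u v : seq A) :=
  L u /\ lg (u ++ w0) /\ R v /\ lg (w0 ++ v) /\ lg (u ++ w0 ++ v).

Lemma edgeP L R w0 p q : ext_edge X L R w0 p q -> exists u v, edgeLR L R w0 u v /\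
  ((p = (false, u) /\ q = (true, v)) \/ (p = (true, v) /\ q = (false, u))).
Proof.
case: p => [[] u]; case: q => [[] v]; rewrite /ext_edge /ext_vertex /=;
  move=> [H1 [H2 H3]].
- by exfalso; case: H3 => [[H _]|[_ [H _]]].
- case: H3 => [[H _]|[_ [_ H3]]] //; exists v, u; split; last by right.
  by case: H1 => ? ?; case: H2 => ? ?; repeat split.
- case: H3 => [[_ [_ H3]]|[H _]] //; exists u, v; split; last by left.
  by case: H1 => ? ?; case: H2 => ? ?; repeat split.
- by exfalso; case: H3 => [[_ [H _]]|[H _]].
Qed.

Lemma edgeI L R w0 u v : edgeLR L R w0 u v ->
  ext_edge X L R w0 (false, u) (true, v) /\ ext_edge X L R w0 (true, v) (false, u).
Proof.
move=> [H1 [H2 [H3 [H4 H5]]]]; rewrite /ext_edge /ext_vertex /=.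
split; (split; [|split]); try (by split); by [left|right].
Qed.

Lemma edge_sym L R w0 p q : ext_edge X L R w0 p q -> ext_edge X L R w0 q p.
Proof.
move=> [H1 [H2 H3]]; split => //; split => //.
by case: H3 => [[? [? ?]]|[? [? ?]]]; [right|left].
Qed.

Lemma edge_irr L R w0 p : ~ ext_edge X L R w0 p p.
Proof. by move=> [_ [_ [[-> []]|[-> []]]]]. Qed.

Lemma edge_P L R w0 p q : ext_edge X L R w0 p q ->
  ext_vertex X L R w0 p /\ ext_vertex X L R w0 q.
Proof. by case=> [? [? _]]. Qed.

Lemma neq_cons_self (a : A) t : t <> a :: t.
Proof. by move=> /(congr1 size) /= /n_Sn. Qed.

Lemma isF_cons a : isF (false, a :: l).
Proof. by rewrite /isF /= eqxx. Qed.

Lemma isFP p : isF p -> exists a, p = (false, a :: l).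
Proof.
case: p => [[] [|a t]] //=; rewrite /isF /= => /eqP ->; by exists a.
Qed.

Lemma lU : l \notin U.
Proof.
apply/negP => Hl.
have Ha : (a0 :: l) \in U by apply: HAl; apply: (lang_catl (t := w)).
case: HU => [_ [Hs _]].
by have := Hs _ _ Hl Ha (suffix_cons l a0); apply: neq_cons_self.
Qed.

Lemma P2c : ~ P2 c.
Proof. move=> [Hl _]; by move: lU; rewrite /L2 in Hl; rewrite Hl. Qed.

Lemma P1c : P1 c.
Proof. by rewrite /ext_vertex /=; split => //; right. Qed.

Lemma P1_notF p : P1 p -> ~~ isF p.
Proof.
case: p => [[] u]; first by rewrite /isF.
rewrite /ext_vertex /= /L1 => [[H _]].
case: H => [[_ Hn]|Hu].
  by apply/negP => /isFP [a [Ha]]; apply: Hn; exists a.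
rewrite Hu /isF /=; case: l => [|b t] //; apply/negP => /eqP H.
exact: (neq_cons_self H).
Qed.

Lemma P1_P2 p : P1 p -> p <> c -> P2 p.
Proof.
case: p => [[] u]; rewrite /ext_vertex /= /L1 /L2 //.
by move=> [[[Hu _]|Hu] Hw] Hc //; case: Hc; rewrite Hu.
Qed.

Lemma P2_P1 p : P2 p -> ~~ isF p -> P1 p /\ p <> c.
Proof.
move=> H2 HF; split; last by move=> Hc; apply: P2c; rewrite -Hc.
case: p H2 HF => [[] u]; rewrite /ext_vertex /=; first by move=> H _.
rewrite /L1 /L2 => [[Hu Hw]] HF.
split => //; left; split => // [[a Ha]]; move: HF; by rewrite Ha isF_cons.
Qed.

Lemma P2_FT p : P2 p -> isF p -> FT p.
Proof.
move=> H /isFP [a Hp]; exists a; split => //; move: H; by rewrite Hp /ext_vertex /= => [[_ ?]].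
Qed.

Lemma FT_isF p : FT p -> isF p.
Proof. by case=> a [-> _]; apply: isF_cons. Qed.

Lemma inN_notF p : inN p -> ~~ isF p.
Proof. by case: p => [[] u] [] //. Qed.

Lemma inN_neqc p : inN p -> p <> c.
Proof. by case: p => [[] u] [] // _ _ []. Qed.

Lemma FT_P2 p : FT p -> P2 p.
Proof.
case=> a [-> H]; rewrite /ext_vertex /= /L2; split => //.
by apply: HAl; apply: (lang_catl (t := w)).
Qed.

Lemma inN_P2 p : inN p -> P2 p.
Proof.
case: p => [[] v] [] //= _ [Hv H]; rewrite /ext_vertex /=; split => //.
exact: (lang_catr (s := l)).
Qed.

Lemma FTx0 : FT x0.
Proof. by exists a0. Qed.


Lemma E1_Hedge a b : E1 a b -> a <> c -> b <> c -> Hedge a b.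
Proof.
move=> /edgeP [u [v [[HL [H1 [H2 [H3 H4]]]] Hor]]] Ha Hb.
have Hul : u <> l.
  by move=> Hul; case: Hor => [[Ea Eb]|[Ea Eb]]; [apply: Ha | apply: Hb];
    rewrite ?Ea ?Eb Hul.
have [Hu Hn] : u \in U /\ ~ (exists a : A, u = a :: l) by case: HL.
have HL2 : edgeLR L2 RV w u v by repeat split.
have [E E'] := edgeI HL2.
have nF : ~~ isF (false, u) by apply/negP => /isFP [a1 [Ha1]]; apply: Hn; exists a1.
by case: Hor => [[Ea Eb]|[Ea Eb]]; rewrite Ea Eb; repeat split => //; rewrite /isF.
Qed.

Lemma Hedge_E1 a b : Hedge a b -> E1 a b /\ a <> c /\ b <> c.
Proof.
move=> [/edgeP [u [v [[HL [H1 [H2 [H3 H4]]]] Hor]]] [Fa Fb]].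
have Hul : u <> l by move=> Hul; move: lU; rewrite -Hul; rewrite /L2 in HL; rewrite HL.
have nF : ~ (exists a : A, u = a :: l).
  by move=> [a1 Ha]; case: Hor => [[Ea Eb]|[Ea Eb]]; [move: Fa|move: Fb];
     rewrite ?Ea ?Eb Ha isF_cons.
have HL1 : edgeLR L1 RV w u v by repeat split => //; left.
have [E E'] := edgeI HL1.
by case: Hor => [[Ea Eb]|[Ea Eb]]; rewrite Ea Eb; repeat split => //; case.
Qed.

Lemma E1c_N b : E1 c b -> inN b.
Proof.
move=> /edgeP [u [v [[HL [H1 [H2 [H3 H4]]]] [[Ea ->]|[Ea _]]]]] //.
by case: Ea => Hu; rewrite -Hu in H4; repeat split.
Qed.

Lemma N_E1c b : inN b -> E1 c b /\ E1 b c.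
Proof.
case: b => [[] v] [] //= _ [Hv H].
have : edgeLR L1 RV w l v.
  repeat split => //; first by right.
  exact: (lang_catr (s := l)).
by case/edgeI.
Qed.

Lemma ET2_shape a b : ET2 a b -> (FT a /\ inN b) \/ (inN a /\ FT b).
Proof.
move=> [/edgeP [u [v [[HL [H1 [H2 [H3 H4]]]] Hor]]] Hf].
case: Hor => [[Ea Eb]|[Ea Eb]]; rewrite Ea Eb in Hf *.
- left; case: Hf => [/isFP [a' Hp]|Hf]; last by move: Hf; rewrite /isF.
  case: Hp => Hu; rewrite Hu in H1 H4 *.
  split; first by exists a'.
  by repeat split => //=; apply: (lang_catr (s := [:: a'])).
- right; case: Hf => [Hf|/isFP [a' Hp]]; first by move: Hf; rewrite /isF.
  case: Hp => Hu; rewrite Hu in H1 H4 *.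
  split; last by exists a'.
  by repeat split => //=; apply: (lang_catr (s := [:: a'])).
Qed.

Lemma ET2_TV a b : ET2 a b -> TV a /\ TV b.
Proof. by case/ET2_shape => [[? ?]|[? ?]]; split; [left|right|right|left]. Qed.

Lemma ET_ET2 q r : ET q r -> ET2 (g q) (g r).
Proof.
move=> /edgeP [u [v [[HL [H1 [H2 [H3 H4]]]] Hor]]].
case: u HL H1 H4 Hor => [|a [|]] //= _ H1 H4 Hor.
have HL2 : edgeLR L2 RV w (a :: l) v.
  repeat split => //.
  - by apply: HAl; apply: (lang_catl (t := w)).
  - by move: H3; rewrite -catA => /lang_catr.
  - by move: H4; rewrite -catA.
have [E E'] := edgeI HL2.
by case: Hor => [[Ea Eb]|[Ea Eb]]; rewrite Ea Eb; split => //=; [left|right]; apply: isF_cons.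
Qed.

Lemma ET2_ET a b : ET2 a b -> ET (h a) (h b).
Proof.
move=> Hab; have Hsh := ET2_shape Hab.
move: Hab => [/edgeP [u [v [[HL [H1 [H2 [H3 H4]]]] Hor]]] Hf].
case: Hor => [[Ea Eb]|[Ea Eb]]; rewrite Ea Eb in Hf Hsh *.
- case: Hsh => [[[a' [[Hu] _]] _]|[[] //]].
  rewrite Hu in H1 H4 *.
  have : edgeLR (@letters A) RV (l ++ w) [:: a'] v.
    repeat split => //; first by move: H4 => /= /(lang_catr (s := [:: a'])); rewrite catA.
    by rewrite /= -catA.
  by rewrite /h /= take0; case/edgeI.
- case: Hsh => [[[a' [Ha' _]] _]|[_ [a' [[Hu] _]]]]; first by [].
  rewrite Hu in H1 H4 *.
  have : edgeLR (@letters A) RV (l ++ w) [:: a'] v.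
    repeat split => //; first by move: H4 => /= /(lang_catr (s := [:: a'])); rewrite catA.
    by rewrite /= -catA.
  by rewrite /h /= take0; case/edgeI.
Qed.

Lemma TV_PT p : TV p -> PT (h p) /\ g (h p) = p.
Proof.
case=> [[a [-> H]]|]; first by rewrite /h /g /= take0; split.
case: p => [[] v] [] //= _ [Hv H]; split => //; split => //; by rewrite -catA.
Qed.

Lemma PT_TV q : PT q -> TV (g q).
Proof.
case: q => [[] u] /=.
  by move=> [Hv H]; right; repeat split => //; rewrite catA.
rewrite /ext_vertex /letters /= => -[Hs H].
case: u Hs H => [|a [|]] // _ H; left; by exists a.
Qed.

Lemma T2c p q : TV p -> TV q -> exists t, is_walk ET2 p t /\ last p t = q.
Proof.
move=> /TV_PT [Hp Ep] /TV_PT [Hq Eq].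
case: HT => [_ [Hc _]].
have [t [Ht Hl]] := Hc _ _ Hp Hq.
exists (map g t); split; last by rewrite -{1}Ep last_map Hl Eq.
rewrite -{1}Ep; apply: walk_map Ht; exact: ET_ET2.
Qed.

Lemma T2NR : NR ET2.
Proof.
move=> x y Exy [q [Hq Hl]].
have HNR : NR ET by apply: acyc_NR; [exact: edge_irr | case: HT => [_ []]].
apply: (HNR _ _ (ET2_ET Exy)); exists (map h q); split; last by rewrite last_map Hl.
apply: walk_map Hq => u v [Euv [N1 N2]]; split; first exact: ET2_ET.
have [Tu Tv] := ET2_TV Euv; have [Tx Ty] := ET2_TV Exy.
have gi : forall p, TV p -> g (h p) = p by move=> p /TV_PT [].
have key : forall p p', TV p -> TV p' -> h p = h p' -> p = p'.
  by move=> p p' Tp Tq Hpq; rewrite -(gi _ Tp) Hpq gi.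
by split => - [E1' E2']; [apply: N1 | apply: N2]; split; apply: key.
Qed.


Definition Reach (E : vertex A -> vertex A -> Prop) a b :=
  exists s, is_walk E a s /\ last a s = b.

Lemma reach_trans E a b d : Reach E a b -> Reach E b d -> Reach E a d.
Proof.
move=> [s1 [H1 L1']] [s2 [H2 L2']]; exists (s1 ++ s2); split.
  by apply/walk_cat; rewrite L1'.
by rewrite last_cat L1'.
Qed.

Definition Bad := exists n1 n2, [/\ inN n1, inN n2, n1 <> n2 &
  exists r, is_walk Hedge n1 r /\ last n1 r = n2].

Lemma hedge_last a r : is_walk Hedge a r -> ~~ isF a -> ~~ isF (last a r).
Proof. by elim: r a => [|b r IH] a //= [[_ [_ Hb]] Hr] _; apply: IH. Qed.

Lemma TV_notF_N p : TV p -> ~~ isF p -> inN p.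
Proof. by case=> // /FT_isF ->. Qed.

Lemma f_E a b : E2 a b -> E1 (f a) (f b).
Proof.
move=> Eab; rewrite /f.
case: (boolP (isF a)) => Fa; case: (boolP (isF b)) => Fb.
- have : ET2 a b by split => //; left.
  by case/ET2_shape => [[_ /inN_notF]|[/inN_notF]]; rewrite ?Fa ?Fb.
- have : ET2 a b by split => //; left.
  case/ET2_shape => [[_ /N_E1c []] //|[/inN_notF]]; by rewrite Fa.
- have : ET2 a b by split => //; right.
  case/ET2_shape => [[_ /inN_notF]|[/N_E1c [] //]]; by rewrite Fb.
- by case: (Hedge_E1 (conj Eab (conj Fa Fb))).
Qed.

Lemma BadE1 : NR E1 -> ~ Bad.
Proof.
move=> H [n1 [n2 [N1 N2 Hne [r [Hr Hl]]]]].
have [Ec1 _] := N_E1c N1.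
apply: (H c n1 Ec1); exists (rcons r c); split; last by rewrite last_rcons.
apply/walk_rcons; split.
  apply: walk_mono Hr => u v /Hedge_E1 [E [Hu Hv]].
  by split => //; split => -[].
rewrite Hl; split; first by case: (N_E1c N2).
by split => -[H1 H2]; [apply: (inN_neqc N2) | apply: Hne].
Qed.

Lemma BadE2 : NR E2 -> ~ Bad.
Proof.
move=> H [n1 [n2 [N1 N2 Hne [r [Hr Hl]]]]].
have [t0 [Ht0 Hl0]] := T2c (or_intror N2) (or_intror N1).
have [t [Ht Htl Hu]] := walk_short Ht0; rewrite Hl0 in Htl.
case: t Ht Htl Hu => [|z t] /=; first by move=> _ Hn; case: Hne.
move=> [Ez Ht] Htl /andP[Hn2 Hu].
have Fz : isF z.
  case/ET2_shape: Ez => [[/FT_isF] | [_ /FT_isF //]].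
  by move: (inN_notF N2) => /negP.
apply: (H n2 z Ez.1); exists (t ++ r); split; last by rewrite last_cat Htl.
apply/walk_cat; split.
  apply: walk_mono_mem Ht => u v Hu' Hv' Euv; split; first by case: Euv.
  split => -[E1' E2']; move: Hn2.
    by rewrite -E1' Hu'.
  by rewrite -E2' inE Hv' orbT.
rewrite Htl; apply: walk_mono Hr => u v [Euv [Fu Fv]]; split => //.
by split => -[E1' E2']; [move: Fv | move: Fu]; rewrite ?E1' ?E2' Fz.
Qed.

Lemma lift_step x y a b : ~~ isF x -> ~~ isF y -> Eminus E1 x y a b ->
  Reach (Eminus E2 x y) (lift a) (lift b).
Proof.
move=> Fx Fy [Eab [N1 N2]].
have avT : forall u v, ET2 u v -> Eminus E2 x y u v.
  move=> u v [Euv Hf]; split => //.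
  by split => -[E1' E2']; move: Hf; rewrite E1' E2'; case/orP; rewrite ?(negbTE Fx) ?(negbTE Fy).
have lc : lift c = x0 by rewrite /lift eqxx.
have ln : forall p, p != c -> lift p = p by move=> p Hp; rewrite /lift (negbTE Hp).
case: (eqVneq a c) => Ha.
  rewrite Ha in Eab; have Nb := E1c_N Eab.
  rewrite Ha lc ln; last by apply/eqP; apply: inN_neqc.
  have [t [Ht Hl]] := T2c (or_introl FTx0) (or_intror Nb).
  by exists t; split => //; apply: walk_mono Ht.
case: (eqVneq b c) => Hb.
  rewrite Hb in Eab; have Na := E1c_N (edge_sym Eab).
  rewrite Hb lc ln //.
  have [t [Ht Hl]] := T2c (or_intror Na) (or_introl FTx0).
  by exists t; split => //; apply: walk_mono Ht.
rewrite !ln //; exists [:: b]; split => //=; split => //.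
have Ha' : a <> c by apply/eqP.
have Hb' : b <> c by apply/eqP.
split => //; by case: (E1_Hedge Eab Ha' Hb').
Qed.

Lemma lift_walk x y s a : ~~ isF x -> ~~ isF y -> is_walk (Eminus E1 x y) a s ->
  Reach (Eminus E2 x y) (lift a) (lift (last a s)).
Proof.
move=> Fx Fy; elim: s a => [|b s IH] a /=; first by exists [::].
move=> [Eab Hs]; apply: reach_trans (IH _ Hs); exact: lift_step.
Qed.


Definition Iv x y t :=
  (TV t /\ Reach (Eminus ET2 x y) y t)
  \/ (exists n1, [/\ inN n1, Reach (Eminus ET2 x y) y n1 & Reach Hedge n1 t])
  \/ Bad.

Lemma I_step x y t t' : Iv x y t -> Eminus E2 x y t t' -> Iv x y t'.
Proof.
move=> HI [Ett' [N1 N2]].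
case: HI => [[Tt [q [Hq Hl]]]|[[n1 [Nn1 [q [Hq Hl]] [r [Hr Hr']]]]|HB]].
- case: (boolP (isF t || isF t')) => Hf.
    have E2' : ET2 t t' by split => //; apply/orP.
    left; split; first by case: (ET2_TV E2').
    exists (rcons q t'); split; last by rewrite last_rcons.
    by apply/walk_rcons; rewrite Hl; split => //; split.
  move: Hf; rewrite negb_or => /andP[Ft Ft'].
  right; left; exists t; split => //; first exact: TV_notF_N.
    by exists q.
  by exists [:: t'].
- have Ft : ~~ isF t by rewrite -Hr'; apply: hedge_last Hr (inN_notF Nn1).
  case: (boolP (isF t')) => Ft'.
    have E2' : ET2 t t' by split => //; right.
    have Nt : inN t.
      by case/ET2_shape: E2' => [[/FT_isF Ht _]|[]//]; move: Ft; rewrite Ht.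
    case: (eqVneq t n1) => Htn.
      left; split; first by case: (ET2_TV E2').
      exists (rcons q t'); split; last by rewrite last_rcons.
      by apply/walk_rcons; rewrite Hl -Htn; split => //; split.
    right; right; exists n1, t; split => //; first by move=> H; rewrite H eqxx in Htn.
    by exists r.
  right; left; exists n1; split => //; first by exists q.
  exists (rcons r t'); split; last by rewrite last_rcons.
  by apply/walk_rcons; rewrite Hr'; split => //; split.
- by right; right.
Qed.

Lemma I_walk x y s t : is_walk (Eminus E2 x y) t s -> Iv x y t -> Iv x y (last t s).
Proof.
elim: s t => [|b s IH] t //= [Etb Hs] HI; apply: IH => //; exact: I_step HI Etb.
Qed.

Lemma NR12 : NR E1 -> NR E2.
Proof.
move=> HN1 x y Exy [q [Hq Hl]].
case: (boolP (isF x || isF y)) => Hxy.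
  have ET2xy : ET2 x y by split => //; apply/orP.
  have I0 : Iv x y y by left; split; [case: (ET2_TV ET2xy) | exists [::]].
  have := I_walk Hq I0; rewrite Hl.
  case=> [[_ [q' Hq']]|[[n1 [Nn1 [q' [Hq' Hl']] [r [Hr Hr']]]]|HB]].
  - by apply: (T2NR ET2xy); exists q'.
  - have Fx : ~~ isF x by rewrite -Hr'; apply: hedge_last Hr (inN_notF Nn1).
    have Nx : inN x by apply: TV_notF_N => //; case: (ET2_TV ET2xy).
    case: (eqVneq x n1) => Hxn.
      by apply: (T2NR ET2xy); exists q'; split => //; rewrite Hxn.
    apply: (BadE1 HN1); exists n1, x; split => //.
      by move=> H; rewrite H eqxx in Hxn.
    by exists r.
  - exact: (BadE1 HN1).
move: Hxy; rewrite negb_or => /andP[Fx Fy].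
have [E1xy [Hxc Hyc]] := Hedge_E1 (conj Exy (conj Fx Fy)).
have fid : forall p, ~~ isF p -> f p = p by move=> p Hp; rewrite /f (negbTE Hp).
have key : forall p z, ~~ isF z -> z <> c -> f p = z -> p = z.
  move=> p z Fz Hzc; rewrite /f; case: ifP => // _ Hc.
  by case: Hzc.
have W : is_walk (Eminus E1 x y) (f y) (map f q).
  apply: walk_map Hq => u v [Euv [N1 N2]]; split; first exact: f_E.
  split => -[E1' E2']; [apply: N1 | apply: N2]; split; apply: key => //.
rewrite (fid _ Fy) in W.
apply: (HN1 x y E1xy); exists (map f q); split => //.
by rewrite -{1}(fid _ Fy) last_map Hl fid.
Qed.

Definition Jv n t :=
  t = c \/ exists n2, [/\ inN n2, n2 <> n & Reach Hedge n2 t].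

Lemma J_step n t t' : Jv n t -> Eminus E1 c n t t' -> Jv n t'.
Proof.
move=> HJ [Ett' [A1 A2]].
case: (eqVneq t' c) => Ht'c; first by left.
case: (eqVneq t c) => Htc.
  rewrite Htc in Ett'; have Nt' := E1c_N Ett'.
  right; exists t'; split => //; last by exists [::].
  by move=> H; apply: A1; split.
case: HJ => [H|[n2 [Nn2 Hne [r [Hr Hl]]]]]; first by rewrite H eqxx in Htc.
right; exists n2; split => //; exists (rcons r t'); split; last by rewrite last_rcons.
apply/walk_rcons; rewrite Hl; split => //.
by apply: E1_Hedge => //; apply/eqP.
Qed.

Lemma J_walk n s t : is_walk (Eminus E1 c n) t s -> Jv n t -> Jv n (last t s).
Proof.
elim: s t => [|b s IH] t //= [Etb Hs] HJ; apply: IH => //; exact: J_step HJ Etb.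
Qed.

Lemma Eminus_sym x y u v : Eminus E1 x y u v -> Eminus E1 y x u v.
Proof. by move=> [E [N1 N2]]; split => //; split. Qed.

Lemma Eminus_comm x y u v : Eminus E1 x y u v -> Eminus E1 x y v u.
Proof.
move=> [E [N1 N2]]; split; first exact: edge_sym.
by split => -[H1 H2]; [apply: N2 | apply: N1].
Qed.

Lemma J_bad n s : inN n -> is_walk (Eminus E1 c n) c s -> last c s = n -> Bad.
Proof.
move=> Nn Hs Hl.
have := J_walk Hs (or_introl erefl); rewrite Hl.
case=> [H|[n2 [Nn2 Hne Hr]]]; first by case: (inN_neqc Nn).
by exists n2, n; split.
Qed.

Lemma NR21 : NR E2 -> NR E1.
Proof.
move=> HN2 x y Exy [q [Hq Hl]].
case: (eqVneq x c) => Hxc.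
  rewrite Hxc in Exy Hq Hl; have Ny := E1c_N Exy.
  have [t [Ht Htl]] := walk_rev (@Eminus_comm c y) Hq.
  rewrite Hl in Ht Htl.
  exact: (BadE2 HN2 (J_bad Ny Ht Htl)).
case: (eqVneq y c) => Hyc.
  rewrite Hyc in Exy Hq Hl; have Nx := E1c_N (edge_sym Exy).
  apply: (BadE2 HN2 (J_bad Nx _ Hl)).
  by apply: walk_mono Hq => u v; apply: Eminus_sym.
have Hx' : x <> c by apply/eqP.
have Hy' : y <> c by apply/eqP.
have [E2xy [Fx Fy]] := E1_Hedge Exy Hx' Hy'.
apply: (HN2 x y E2xy).
have := lift_walk Fx Fy Hq; rewrite Hl /lift (negbTE Hxc) (negbTE Hyc).
done.
Qed.

Lemma conn12 : connected P1 E1 -> connected P2 E2.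
Proof.
move=> C p q Pp Pq.
have lc : lift c = x0 by rewrite /lift eqxx.
have toL : forall p, P2 p -> Reach E2 p (lift (f p)) /\ Reach E2 (lift (f p)) p.
  move=> p' Pp'; rewrite /f; case: ifP => Fp.
    have Tp : TV p' by left; apply: P2_FT => //; rewrite Fp.
    rewrite lc.
    have [t1 [H1 L1']] := T2c Tp (or_introl FTx0).
    have [t2 [H2 L2']] := T2c (or_introl FTx0) Tp.
    have m : forall x s, is_walk ET2 x s -> is_walk E2 x s.
      by move=> ? ?; apply: walk_mono => u v [].
    by split; [exists t1 | exists t2]; split => //; apply: m.
  have Hpc : p' != c by apply/eqP => Hc; apply: P2c; rewrite -Hc.
  by rewrite /lift (negbTE Hpc); split; exists [::].
have P1f : forall p, P2 p -> P1 (f p).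
  move=> p' Pp'; rewrite /f; case: ifP => Fp; first exact: P1c.
  by case: (P2_P1 Pp'); rewrite ?Fp.
have [s [Hs Hl]] := C _ _ (P1f _ Pp) (P1f _ Pq).
set d : vertex A := (true, [::]).
have Fd : ~~ isF d by [].
have Hs' : is_walk (Eminus E1 d d) (f p) s.
  apply: walk_mono Hs => u v E; split => //.
  by split => -[H1 H2]; apply: (@edge_irr L1 RV w d); rewrite -{1}H1 -H2.
have [t [Ht Htl]] := lift_walk Fd Fd Hs'.
apply: reach_trans (toL _ Pp).1 _.
apply: reach_trans (toL _ Pq).2.
exists t; split; last by rewrite Htl Hl.
by apply: walk_mono Ht => u v [].
Qed.

Lemma conn21 : connected P2 E2 -> connected P1 E1.
Proof.
move=> C p q Pp Pq.
have P2l : forall p, P1 p -> P2 (lift p).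
  move=> p' Pp'; rewrite /lift; case: eqP => Hc; first exact: FT_P2 FTx0.
  exact: P1_P2.
have fl : forall p, P1 p -> f (lift p) = p.
  move=> p' Pp'; rewrite /lift; case: eqP => Hc.
    by rewrite /f /x0 isF_cons.
  by rewrite /f (negbTE (P1_notF Pp')).
have [s [Hs Hl]] := C _ _ (P2l _ Pp) (P2l _ Pq).
exists (map f s); split.
  by rewrite -{1}(fl _ Pp); apply: walk_map Hs => u v; apply: f_E.
by rewrite -(fl _ Pp) last_map Hl fl.
Qed.

Lemma tree_equiv : is_tree P1 E1 <-> is_tree P2 E2.
Proof.
split.
  move=> [_ [C1 A1]]; split; first by exists x0; apply: FT_P2 FTx0.
  split; first exact: conn12.
  by apply: NR_acyc; apply: NR12; apply: acyc_NR => //; exact: edge_irr.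
move=> [_ [C2 A2]]; split; first by exists c; apply: P1c.
split; first exact: conn21.
by apply: NR_acyc; apply: NR21; apply: acyc_NR => //; exact: edge_irr.
Qed.

End Main.

Theorem mainTheorem14 (A : finType) (X : config A -> Prop) (w : seq A)
  (U V : seq (seq A)) (l : seq A) :
  shift_space X ->
  lang X w ->
  X_max_suffix_code X (fun u => u \in U) ->
  X_max_prefix_code X (fun v => v \in V) ->
  lang X l ->
  lang X (l ++ w) ->
  (forall a : A, lang X (a :: l) -> (a :: l) \in U) ->
  ext_graph_tree X (@letters A) (fun v => v \in V) (l ++ w) ->
  (ext_graph_tree X
     (fun u => (u \in U /\ ~ (exists a : A, u = a :: l)) \/ u = l)
     (fun v => v \in V) w
   <-> ext_graph_tree X (fun u => u \in U) (fun v => v \in V) w).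
Proof.
move=> _ _ HU _ _ Hlw HAl HT.
have [a0 Ha0] := lang_ext Hlw.
exact: (tree_equiv HU Hlw Ha0 HAl HT).
Qed.
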